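(* Let $n\ge2$, $\alpha_2,\dots,\alpha_n\in\mathbb C$, and $T=I+\alpha_2D^2+\cdots+\alpha_nD^n\in\mathcal L(\mathcal P_n)$. Then for every $\varepsilon>0$ there exists $C_T(\varepsilon)>0$ such that for every $f\in\mathcal P_n$ of degree at least $2$ with simple roots, $$\tau(f)>C_T(\varepsilon)\ \Longrightarrow\ d_F\bigl(Z(f),Z(Tf)\bigr)<\varepsilon.$$
   Context: $\mathcal P_n$ is the complex vector space of polynomials of degree at most $n$, $D$ differentiation, $I$ identity. $Z(f)$ denotes the roots of $f$ counted with multiplicity (a multiset of size $\deg f$); $\deg Tf=\deg f$ for such $T$. For $f$ of degree $\ge2$ with at least two distinct roots, $\tau(f):=\min\{|w-v|:w\in Z(f),\ v\in Z(f')\setminus\{w\}\}$. For multisets $A=\{u_1,\dots,u_m\}$, $B=\{v_1,\dots,v_m\}$ in $\mathbb C$, $d_F(A,B)=\min_{\sigma}\max_{k}|u_k-v_{\sigma(k)}|$ over permutations $\sigma$ of $\{1,\dots,m\}$. *)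

(* Defs.v *)
From HB Require Import structures.
From mathcomp Require Import all_boot all_order all_algebra all_fingroup.
Set Implicit Arguments. Unset Strict Implicit. Unset Printing Implicit Defensive.
Import Order.TTheory GRing.Theory Num.Theory.
Local Open Scope ring_scope.

Section Defs.
Variable K : numClosedFieldType.

(* Z(f): the roots of f listed with multiplicity (a sequence r with
   f = lead_coef f *: \prod_(z <- r) ('X - z), of size deg f).  The order of
   the listing is irrelevant for everything below (dF minimises over all
   permutations, tau takes a minimum over all pairs). *)
Definition Z (f : {poly K}) : seq K := sval (closed_field_poly_normal f).

Definition minseq (s : seq K) : K := foldr Num.min (head 0 s) s.

Definition tau (f : {poly K}) : K :=
  minseq [seq `|w - v| | w <- Z f, v <- [seq v <- Z f^`() | v != w]].

(* matching distance d_F(A,B) = min_sigma max_k |u_k - v_sigma(k)|,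
   for A, B of the same size m (indices beyond size give default 0). *)
Definition dF (A B : seq K) : K :=
  let m := size A in
  minseq [seq \big[Num.max/0]_(k < m) `|A`_k - B`_(nat_of_ord (s k))| | s : {perm 'I_m} <- enum [set: {perm 'I_m}]].

Definition Top (n : nat) (alpha : nat -> K) (f : {poly K}) : {poly K} :=
  f + \sum_(2 <= k < n.+1) alpha k *: f^`(k).

End Defs.

(* Main.v *)
Require Import Defs.
From HB Require Import structures.
From mathcomp Require Import all_boot all_order all_algebra all_fingroup.
Import Order.TTheory GRing.Theory Num.Theory.
Local Open Scope ring_scope.

Lemma ZE {K : numClosedFieldType} (f : {poly K}) :
  f = lead_coef f *: \prod_(z <- Z f) ('X - z%:P).
Proof. by rewrite /Z; case: (closed_field_poly_normal f). Qed.

Lemma nderivXsubC_h (K : numClosedFieldType) (p : {poly K}) c r w :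
  (p * ('X - c%:P))^`N(r.+1).[w] = p^`N(r).[w] + p^`N(r.+1).[w] * (w - c).
Proof.
have -> : p * ('X - c%:P) = p * 'X + 0%:P - c *: p.
  by rewrite polyC0 addr0 mulrBr -mul_polyC [c%:P * p]mulrC.
rewrite nderivnB nderivnMXaddC nderivnZ.

by rewrite hornerD hornerN hornerZ hornerD hornerMX mulrBr addrA [c * _]mulrC.
Qed.

Lemma prod_bound (K : numClosedFieldType) (s : seq K) (w t : K) :
  0 <= t -> (forall v, v \in s -> t <= `|w - v|) ->
  forall r, t ^+ r * `|(\prod_(v <- s) ('X - v%:P))^`N(r).[w]|
     <= 2 ^+ size s * `|(\prod_(v <- s) ('X - v%:P)).[w]|.
Proof.
move=> t0; elim: s => [|a s IH] Hs r.
  rewrite big_nil /= -[1 : {poly K}]/(1%:P) nderivnC.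
  case: r => [|r] /=; first by rewrite !expr0 !mul1r.
  by rewrite horner0 normr0 mulr0 hornerC normr1 mulr1 exprn_ge0.
have Hs' : forall v, v \in s -> t <= `|w - v| by move=> v vs; apply: Hs; rewrite inE vs orbT.
have ta : t <= `|w - a| by apply: Hs; rewrite inE eqxx.
rewrite big_cons [('X - a%:P) * _]mulrC /= exprS.
case: r => [|r].
  rewrite expr0 mul1r nderivn0; apply: ler_peMl => //.
  by rewrite -exprS exprn_ege1 // ler1n.
rewrite nderivXsubC_h hornerM hornerXsubC normrM.
apply: (le_trans (ler_wpM2l (exprn_ge0 _ t0) (ler_normD _ _))).
rewrite normrM mulrDr.
have h1 := IH Hs' r; have h2 := IH Hs' r.+1.
move: h1 h2.
set P := `|(\prod_(v <- s) ('X - v%:P)).[w]|.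
set P1 := `|(\prod_(v <- s) ('X - v%:P))^`N(r).[w]|.
set P2 := `|(\prod_(v <- s) ('X - v%:P))^`N(r.+1).[w]|.
move=> h1 h2.
have Q0 : 0 <= 2 ^+ size s * P.
  by apply: mulr_ge0; [apply: exprn_ge0; rewrite ler0n|rewrite /P normr_ge0].
have e1 : t ^+ r.+1 * P1 <= `|w - a| * (2 ^+ size s * P).
  rewrite exprS -mulrA; apply: (le_trans (ler_wpM2l t0 h1)).
  exact: (ler_wpM2r Q0 ta).
have e2 : t ^+ r.+1 * (P2 * `|w - a|) <= (2 ^+ size s * P) * `|w - a|.
  by rewrite mulrA; apply: ler_wpM2r.
apply: (le_trans (lerD e1 e2)); rewrite le_eqVlt; apply/orP; left; apply/eqP.
by rewrite [`|w - a| * _]mulrC -mulr2n -[in RHS]mulrA mulr_natl !mulrA.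
Qed.

Lemma Z_size {K : numClosedFieldType} (p : {poly K}) : p != 0 -> size (Z p) = (size p).-1.
Proof.
move=> p0; rewrite {2}(ZE p) size_scale ?lead_coef_eq0 //.
by rewrite size_prod_XsubC.
Qed.

Lemma Z_root {K : numClosedFieldType} (p : {poly K}) v : v \in Z p -> p.[v] = 0.
Proof.
move=> vZ; rewrite (ZE p) hornerZ horner_prod.
rewrite (big_rem v) //= hornerXsubC subrr mul0r mulr0 //.
Qed.

Lemma Z_mem {K : numClosedFieldType} (p : {poly K}) w : p != 0 -> p.[w] = 0 -> w \in Z p.
Proof.
move=> p0; rewrite {1}(ZE p) hornerZ horner_prod => /eqP.
rewrite mulf_eq0 lead_coef_eq0 (negbTE p0) /= prodf_seq_eq0 => /hasP [v vZ /=].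
by rewrite hornerXsubC subr_eq0 => /eqP ->.
Qed.

Lemma Z_bound {K : numClosedFieldType} (p : {poly K}) (w t : K) :
  0 <= t -> (forall v, v \in Z p -> t <= `|w - v|) ->
  forall r, t ^+ r * `|p^`N(r).[w]| <= 2 ^+ size (Z p) * `|p.[w]|.
Proof.
move=> t0 H r; have E := ZE p; move: H E; set s := Z p => H E; rewrite E nderivnZ !hornerZ !normrM mulrCA [_ * (`|_| * _)]mulrCA.
by apply: ler_wpM2l => //; apply: prod_bound.
Qed.

Lemma Z_simple {K : numClosedFieldType} (p : {poly K}) w :
  p != 0 -> uniq (Z p) -> w \in Z p -> p^`().[w] != 0.
Proof.
move=> p0 u wZ; rewrite (ZE p) derivZ hornerZ mulf_neq0 ?lead_coef_eq0 //.
rewrite (big_rem w) //= derivM derivXsubC mul1r hornerD hornerM hornerXsubC subrr mul0r addr0.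
rewrite horner_prod prodf_seq_neq0; apply/allP => v vr /=.
rewrite hornerXsubC subr_eq0; apply/eqP => ev; move: vr; rewrite -ev.
by rewrite mem_rem_uniqF.
Qed.

Lemma two_pow_le {K : numClosedFieldType} (a b : nat) : (a <= b)%N -> (2 : K) ^+ a <= 2 ^+ b.
Proof. by move=> ab; rewrite ler_eXn2l // ltr1n. Qed.

Lemma hder_bound {K : numClosedFieldType} (h : {poly K}) n w t :
  (size h <= n)%N -> 1 <= t -> (forall v, v \in Z h -> t <= `|w - v|) ->
  forall j, (1 <= j)%N -> t * `|h^`(j).[w]| <= j`!%:R * (2 ^+ n * `|h.[w]|).
Proof.
move=> sh t1 H j j1.
have t0 : 0 <= t by apply: le_trans t1.
have [->|h0] := eqVneq h 0.
  by rewrite raddf0 horner0 normr0 mulr0 mulr_ge0 ?mulr_ge0 ?exprn_ge0 ?ler0n.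
rewrite nderivn_def hornerMn normrMn -[_ *+ j`!]mulr_natl mulrCA.
apply: ler_wpM2l; first by rewrite ler0n.
apply: le_trans (_ : t ^+ j * `|h^`N(j).[w]| <= _).
  by apply: ler_wpM2r => //; apply: ler_eXnr.
apply: (le_trans (Z_bound h w t t0 H j)); apply: ler_wpM2r => //.
apply: two_pow_le; rewrite Z_size //.
by case: (size h) sh => //= k; apply: leq_trans.
Qed.

Lemma sum_bound {K : numClosedFieldType} n (alpha c : nat -> K) t M :
  0 <= t -> (forall k, (2 <= k)%N -> t * `|c k| <= k`!%:R * M) ->
  t * `|\sum_(2 <= k < n.+1) alpha k * c k|
    <= (\sum_(2 <= k < n.+1) `|alpha k| * k`!%:R) * M.
Proof.
move=> t0 H; rewrite mulr_suml.
apply: le_trans (ler_wpM2l t0 (ler_norm_sum _ _ _)) _.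
rewrite mulr_sumr; apply: ler_sum_nat => k /andP [k2 _].
rewrite normrM mulrCA -mulrA; apply: ler_wpM2l => //.
exact: H.
Qed.

Lemma Top_eval {K : numClosedFieldType} n (alpha : nat -> K) f w :
  f.[w] = 0 ->
  (Top n alpha f).[w] = \sum_(2 <= k < n.+1) alpha k * f^`(k).[w].
Proof.
move=> fw; rewrite /Top hornerD fw add0r horner_sum.
by apply: eq_bigr => k _; rewrite hornerZ.
Qed.

Lemma Top_deval {K : numClosedFieldType} n (alpha : nat -> K) f w :
  (Top n alpha f)^`().[w] = f^`().[w] + \sum_(2 <= k < n.+1) alpha k * f^`(k.+1).[w].
Proof.
rewrite /Top derivD hornerD; congr (_ + _).
rewrite (linear_sum deriv) horner_sum.
by apply: eq_bigr => k _ /=; rewrite derivZ hornerZ -derivnS.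
Qed.

Lemma nn_le {K : numClosedFieldType} (x y : K) : 0 <= x -> 0 <= y -> ~~ (x < y) -> y <= x.
Proof. by move=> x0 y0; rewrite real_leNgt ?ger0_real. Qed.

Lemma min_le_l {K : numClosedFieldType} (x y : K) : 0 <= x -> 0 <= y -> Num.min x y <= x.
Proof. by move=> x0 y0; rewrite /Order.min; case: ifP => // /negbT /(nn_le _ _ x0 y0). Qed.

Lemma min_le_r {K : numClosedFieldType} (x y : K) : 0 <= x -> 0 <= y -> Num.min x y <= y.
Proof. by move=> x0 y0; rewrite /Order.min; case: ifP => // /ltW. Qed.

Lemma min_ge0 {K : numClosedFieldType} (x y : K) : 0 <= x -> 0 <= y -> 0 <= Num.min x y.
Proof. by move=> x0 y0; rewrite /Order.min; case: ifP. Qed.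

Lemma max_lt {K : numClosedFieldType} (x y e : K) : x < e -> y < e -> Num.max x y < e.
Proof. by move=> x0 y0; rewrite /Order.max; case: ifP. Qed.

Lemma max_ge0 {K : numClosedFieldType} (x y : K) : 0 <= x -> 0 <= y -> 0 <= Num.max x y.
Proof. by move=> x0 y0; rewrite /Order.max; case: ifP. Qed.

Lemma foldr_min_ge0 {K : numClosedFieldType} (a : K) s :
  0 <= a -> (forall y, y \in s -> 0 <= y) -> 0 <= foldr Num.min a s.
Proof.
move=> a0; elim: s => //= b s IH H; apply: min_ge0.
  by apply: H; rewrite inE eqxx.
by apply: IH => y ys; apply: H; rewrite inE ys orbT.
Qed.

Lemma foldr_min_le {K : numClosedFieldType} (a : K) s x :
  0 <= a -> (forall y, y \in s -> 0 <= y) -> x \in s -> foldr Num.min a s <= x.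
Proof.
move=> a0; elim: s => // b s IH H; rewrite inE => /orP [/eqP -> | xs] /=.
  apply: min_le_l; first by apply: H; rewrite inE eqxx.
  by apply: foldr_min_ge0 => // y ys; apply: H; rewrite inE ys orbT.
have H' : forall y, y \in s -> 0 <= y by move=> y ys; apply: H; rewrite inE ys orbT.
apply: le_trans (IH H' xs); apply: min_le_r; first by apply: H; rewrite inE eqxx.
exact: foldr_min_ge0.
Qed.

Lemma minseq_le {K : numClosedFieldType} (s : seq K) x :
  (forall y, y \in s -> 0 <= y) -> x \in s -> minseq s <= x.
Proof.
move=> H xs; apply: foldr_min_le => //.
by case: s H xs => //= a s H _; apply: H; rewrite inE eqxx.
Qed.

Lemma bigmax_lt {K : numClosedFieldType} m (F : 'I_m -> K) e :
  0 < e -> (forall k, F k < e) -> \big[Num.max/0]_(k < m) F k < e.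
Proof. by move=> e0 H; elim/big_ind: _ => // x y; apply: max_lt. Qed.

Lemma bigmax_ge0 {K : numClosedFieldType} m (F : 'I_m -> K) :
  (forall k, 0 <= F k) -> 0 <= \big[Num.max/0]_(k < m) F k.
Proof. by move=> H; elim/big_ind: _ => // x y; apply: max_ge0. Qed.

Lemma near_root {K : numClosedFieldType} (n : nat) (alpha : nat -> K) (f : {poly K}) (w t eps : K) :
  f != 0 -> (size f <= n.+1)%N -> uniq (Z f) -> w \in Z f ->
  1 <= t -> (forall v, v \in Z f^`() -> t <= `|w - v|) ->
  0 < eps -> (size (Top n alpha f) <= n.+1)%N ->
  let D := (2 : K) ^+ n in
  let A := \sum_(2 <= k < n.+1) `|alpha k| * k`!%:R in
  A * D < t -> A * D * D + eps * (A * D) < eps * t ->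
  exists2 u, u \in Z (Top n alpha f) & `|w - u| < eps.
Proof.
move=> f0 sf uf wZ t1 Hv e0 sg D A hA1 hA2.
have t0 : 0 <= t by apply: le_trans t1.
set h := f^`().
set g := Top n alpha f.
have hw0 : h.[w] != 0 by apply: Z_simple.
have Hp : 0 < `|h.[w]| by rewrite normr_gt0.
have sh : (size h <= n)%N by rewrite -ltnS; exact: leq_trans (lt_size_deriv f0) sf.
have B : forall j, (1 <= j)%N -> t * `|h^`(j).[w]| <= j`!%:R * (D * `|h.[w]|).
  exact: hder_bound.
have gw : t * `|g.[w]| <= A * (D * `|h.[w]|).
  rewrite /g Top_eval; last exact: Z_root.
  apply: sum_bound => // k; case: k => // k k2.
  rewrite derivSn; apply: le_trans (B k k2) _; apply: ler_wpM2r.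
    by rewrite mulr_ge0 // exprn_ge0.
  by rewrite ler_nat leq_fact.
have gdw : t * `|g^`().[w] - h.[w]| <= A * (D * `|h.[w]|).
  rewrite /g Top_deval addrC addKr.
  apply: sum_bound => // k k2.
  rewrite derivSn; apply: le_trans (B k (ltnW k2)) _; apply: ler_wpM2r => //.
  by rewrite mulr_ge0 // exprn_ge0.
have AD0 : 0 <= A * D.
  by rewrite mulr_ge0 ?exprn_ge0 // sumr_ge0 // => k _; rewrite mulr_ge0 ?ler0n.
case: (boolP (has (fun u => `|w - u| < eps) (Z g))) => [/hasP [u uZ uw] | hn].
  by exists u.
exfalso.
have hall : forall u, u \in Z g -> eps <= `|w - u|.
  move=> u uZ; apply: nn_le => //; first by rewrite ltW.
  by apply/negP => uw; move/negP: hn; apply; apply/hasP; exists u.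
have g0 : g != 0.
  apply/negP => /eqP g0; move: gdw; rewrite g0 deriv0 horner0 sub0r normrN.
  by rewrite mulrA ler_pM2r // => /(lt_le_trans hA1); rewrite ltxx.
have sZg : (size (Z g) <= n)%N by rewrite Z_size //; case: (size g) sg.
have Zb := Z_bound g w eps (ltW e0) hall 1.
rewrite expr1 nderivn1 in Zb.
have Zb' : eps * `|g^`().[w]| <= D * `|g.[w]|.
  apply: le_trans Zb _; apply: ler_wpM2r => //; exact: two_pow_le.
have tri : `|h.[w]| <= `|g^`().[w]| + `|g^`().[w] - h.[w]|.
  have E : g^`().[w] - (g^`().[w] - h.[w]) = h.[w] by rewrite opprB addrCA subrr addr0.
  by have := ler_normB (g^`().[w]) (g^`().[w] - h.[w]); rewrite E.
move: Zb' gw gdw tri.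
set H := `|h.[w]|; set G1 := `|g^`().[w]|; set G0 := `|g.[w]|; set E1 := `|g^`().[w] - h.[w]|.
move=> Zb' gw gdw tri.
have D0 : 0 <= D by rewrite exprn_ge0.
have et0 : 0 <= eps * t by rewrite mulr_ge0 // ltW.
have c1 : eps * t * H <= (A * D * D + eps * (A * D)) * H.
  apply: le_trans (_ : eps * t * (G1 + E1) <= _); first exact: ler_wpM2l.
  rewrite mulrDr.
  apply: le_trans (lerD (_ : eps * t * G1 <= D * (A * (D * H)))
                        (_ : eps * t * E1 <= eps * (A * (D * H)))) _.
  - rewrite [eps * t]mulrC -mulrA; apply: le_trans (ler_wpM2l t0 Zb') _.
    by rewrite mulrCA; apply: ler_wpM2l.
  - by rewrite -mulrA; apply: ler_wpM2l => //; rewrite ltW.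
  - by rewrite mulrDl !mulrA [D * A]mulrC.
move: c1; rewrite ler_pM2r // => c1.
by move: (lt_le_trans hA2 c1); rewrite ltxx.
Qed.

Lemma nderivN_le {K : numClosedFieldType} (f : {poly K}) i w :
  `|f^`N(i.+2).[w]| <= `|(f^`())^`N(i.+1).[w]|.
Proof.
have E : f^`N(i.+2).[w] *+ i.+2 = (f^`())^`N(i.+1).[w].
  have e1 := nderivn_def i.+2 f; have e2 := nderivn_def i.+1 f^`().
  rewrite -derivSn e1 in e2.
  have := congr1 (fun p => p.[w]) e2; rewrite /= !hornerMn factS mulrnA.
  rewrite -[_ *+ i.+2 *+ _]mulr_natr -[(f^`())^`N(i.+1).[w] *+ _]mulr_natr.
  by move/mulIf; apply; rewrite pnatr_eq0 -lt0n fact_gt0.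
by rewrite -E normrMn -mulr_natr ler_peMr // ler1n.
Qed.

Lemma separation {K : numClosedFieldType} (n : nat) (f : {poly K}) (w1 w2 t : K) :
  f != 0 -> (size f <= n.+1)%N -> (2 <= size f)%N -> uniq (Z f) -> w1 \in Z f ->
  f.[w2] = 0 -> w2 != w1 ->
  1 <= t -> (forall v, v \in Z f^`() -> t <= `|w1 - v|) ->
  `|w2 - w1| <= t -> t <= n%:R * 2 ^+ n * `|w2 - w1|.
Proof.
move=> f0 sf s2 uf w1Z fw2 w21 t1 Hv xt.
have t0 : 0 <= t by apply: le_trans t1.
set h := f^`().
set d := w2 - w1.
have hw0 : h.[w1] != 0 by apply: Z_simple.
have Hp : 0 < `|h.[w1]| by rewrite normr_gt0.
have xp : 0 < `|d| by rewrite normr_gt0 subr_eq0.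
have sZh : (size (Z h) <= n)%N.
  rewrite Z_size; last by apply/negP => /eqP h0; move: hw0; rewrite h0 horner0 eqxx.
  have := lt_size_deriv f0; rewrite -/h.
  by case: (size h) => //= k /leq_trans /(_ sf) /ltnW.
have T := nderiv_taylor f (mulrC w1 d).
rewrite /d addrC subrK fw2 in T.
move: s2 T; case ef: (size f) => [|[|m]] // _.
rewrite !big_ord_recl /= nderivn0 nderivn1 (Z_root _ _ w1Z) expr0 mulr1 add0r expr1.
under eq_bigr => i _ do rewrite /bump /= !add1n.
move/esym/eqP; rewrite addr_eq0 => /eqP T.
have hn : `|h.[w1]| * `|d| = `|\sum_(i < m) f^`N(i.+2).[w1] * d ^+ i.+2|.
  by rewrite -normrM T normrN.
set D := (2 : K) ^+ n.
have term : forall i : 'I_m, t * `|f^`N(i.+2).[w1] * d ^+ i.+2| <= D * `|h.[w1]| * `|d| ^+ 2.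
  move=> i; rewrite normrM normrX.
  apply: le_trans (_ : t * (`|h^`N(i.+1).[w1]| * `|d| ^+ i.+2) <= _).
    by apply: ler_wpM2l => //; apply: ler_wpM2r; [rewrite exprn_ge0|apply: nderivN_le].
  rewrite -addn2 exprD mulrA mulrA; apply: ler_wpM2r; first by rewrite exprn_ge0.
  apply: le_trans (_ : t * `|h^`N(i.+1).[w1]| * t ^+ i <= _).
    rewrite -mulrA; apply: ler_wpM2l => //; apply: ler_wpM2l => //.
    by apply: lerXn2r; rewrite ?nnegrE // ltW.
  rewrite mulrC mulrA -exprSr.
  apply: le_trans (Z_bound h w1 t t0 Hv i.+1) _; apply: ler_wpM2r => //.
  exact: two_pow_le.
have mn : (m <= n)%N by move: sf; rewrite ef ltnS => /ltnW.
have c1 : t * (`|h.[w1]| * `|d|) <= (n%:R * D * `|d|) * (`|h.[w1]| * `|d|).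
  rewrite {1}hn; apply: le_trans (ler_wpM2l t0 (ler_norm_sum _ _ _)) _.
  rewrite mulr_sumr; apply: le_trans (ler_sum _ (fun i _ => term i)) _.
  rewrite sumr_const card_ord -[_ *+ m]mulr_natl.
    apply: le_trans (_ : n%:R * (D * `|h.[w1]| * `|d| ^+ 2) <= _).
    apply: ler_wpM2r; last by rewrite ler_nat.
    by rewrite !mulr_ge0 ?exprn_ge0.
  by rewrite expr2 !mulrA [n%:R * D * `|d| * _]mulrAC.
by move: c1; rewrite ler_pM2r // mulr_gt0.
Qed.

Lemma size_derivn_lt {K : numClosedFieldType} (f : {poly K}) k :
  f != 0 -> (1 <= k)%N -> (size f^`(k) < size f)%N.
Proof.
move=> f0; elim: k => // [[|k]] IH _.
  by rewrite derivn1 lt_size_deriv.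
rewrite derivnS; have [->|hk] := eqVneq (f^`(k.+1)) 0.
  by rewrite deriv0 size_poly0 size_poly_gt0.
by apply: leq_trans (lt_size_deriv hk) (ltnW (IH _)).
Qed.

Lemma size_Top {K : numClosedFieldType} n (alpha : nat -> K) (f : {poly K}) :
  f != 0 -> size (Top n alpha f) = size f.
Proof.
move=> f0; rewrite /Top size_polyDl //.
rewrite big_nat_cond; elim/big_ind: _ => //.
- by rewrite size_poly0 size_poly_gt0.
- move=> p q sp sq; apply: leq_ltn_trans (size_polyD p q) _.
  by rewrite gtn_max sp sq.
- move=> k /andP [/andP [k2 _] _].
  apply: leq_ltn_trans (size_scale_leq _ _) _.
  by apply: size_derivn_lt => //; apply: ltnW.
Qed.

Lemma tau_le {K : numClosedFieldType} (f : {poly K}) w v :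
  w \in Z f -> v \in Z f^`() -> v != w -> tau f <= `|w - v|.
Proof.
move=> wZ vZ vw; apply: minseq_le.
  by move=> y /allpairsPdep [a [b [_ _ ->]]].
by apply: (allpairs_f_dep (fun w v => `|w - v|) wZ); rewrite mem_filter vw.
Qed.

Lemma dF_lt {K : numClosedFieldType} (s s' : seq K) (eps : K) :
  0 < eps -> size s' = size s -> uniq s ->
  (forall w, w \in s -> exists2 u, u \in s' & `|w - u| < eps) ->
  (forall w1 w2, w1 \in s -> w2 \in s -> w1 != w2 -> 2 * eps <= `|w2 - w1|) ->
  dF s s' < eps.
Proof.
move=> e0 ss us near sep; rewrite /dF.
set m := size s.
have ex : forall i : 'I_m, exists j : 'I_m, `|s`_i - s'`_j| < eps.
  move=> i; have [u uZ uw] := near _ (mem_nth 0 (ltn_ord i)).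
  have jm : (index u s' < m)%N by rewrite /m -ss index_mem.
  by exists (Ordinal jm); rewrite /= nth_index.
pose jf (i : 'I_m) := odflt i [pick j : 'I_m | `|s`_i - s'`_j| < eps].
have jfP : forall i : 'I_m, `|s`_i - s'`_(jf i)| < eps.
  move=> i; rewrite /jf; case: pickP => [j //| H].
  by have [j] := ex i; rewrite H.
have jf_inj : injective jf.
  move=> i1 i2 e.
  have h1 := jfP i1; have h2 := jfP i2; rewrite -e in h2.
  apply/val_inj/eqP; rewrite -(nth_uniq 0 (ltn_ord i1) (ltn_ord i2) us).
  apply/negPn/negP => ne.
  have := sep _ _ (mem_nth 0 (ltn_ord i1)) (mem_nth 0 (ltn_ord i2)) ne.
  have : `|s`_i2 - s`_i1| < 2 * eps.
    have -> : s`_i2 - s`_i1 = (s`_i2 - s'`_(jf i1)) - (s`_i1 - s'`_(jf i1)).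
      by rewrite opprB addrA subrK.
    apply: le_lt_trans (ler_normB _ _) _.
    by rewrite mulr2n mulrDl mul1r ltrD.
  by move=> a b; move: (lt_le_trans a b); rewrite ltxx.
pose sg := perm jf_inj.
apply: (@le_lt_trans _ _ (\big[Num.max/0]_(k < m) `|s`_k - s'`_(sg k)|)); last first.
  by apply: bigmax_lt => // k; rewrite /sg permE.
apply: minseq_le.
- by move=> y /mapP [p _ ->]; apply: bigmax_ge0.
- by apply: (map_f _ (_ : sg \in enum [set: {perm 'I_m}])); rewrite mem_enum in_setT.
Qed.

Theorem theorem4p2 (K : numClosedFieldType) (n : nat) (alpha : nat -> K) :
  (2 <= n)%N ->
  forall eps : K, 0 < eps ->
  exists CT : K, 0 < CT /\
    forall f : {poly K},
      (size f <= n.+1)%N -> (2 < size f)%N -> uniq (Z f) ->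
      CT < tau f -> dF (Z f) (Z (Top n alpha f)) < eps.
Proof.
move=> n2 eps e0.
set D := (2 : K) ^+ n.
set A := \sum_(2 <= k < n.+1) `|alpha k| * k`!%:R.
have D0 : 0 <= D by rewrite exprn_ge0.
have A0 : 0 <= A by rewrite sumr_ge0 // => k _; rewrite mulr_ge0 ?ler0n.
have AD0 : 0 <= A * D by rewrite mulr_ge0.
set a3 := (A * D * D + eps * (A * D)) / eps.
have e0' : 0 <= eps by apply: ltW.
have a30 : 0 <= a3.
  apply: divr_ge0 => //; apply: addr_ge0; apply: mulr_ge0 => //.
set a4 := n%:R * D * (2 * eps).
have e20 : 0 <= 2 * eps by rewrite mulr_ge0.
have a40 : 0 <= a4 by rewrite /a4 !mulr_ge0 ?ler0n.
have up : forall x y : K, 0 <= y -> x <= x + y by move=> x y y0; rewrite lerDl.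
have upl : forall x y : K, 0 <= y -> x <= y + x by move=> x y y0; rewrite lerDr.
set CT := 1 + 2 * eps + A * D + a3 + a4.
have L1 : 1 <= CT.
  apply: le_trans (up _ _ a40); apply: le_trans (up _ _ a30).
  apply: le_trans (up _ _ AD0); exact: up.
have L2 : 2 * eps <= CT.
  apply: le_trans (up _ _ a40); apply: le_trans (up _ _ a30).
  apply: le_trans (up _ _ AD0); exact: upl.
have L3 : A * D <= CT.
  apply: le_trans (up _ _ a40); apply: le_trans (up _ _ a30).
  apply: upl; exact: addr_ge0.
have L4 : a3 <= CT.
  apply: le_trans (up _ _ a40); apply: upl; rewrite !addr_ge0 //.
have L5 : a4 <= CT by apply: upl; rewrite !addr_ge0.
exists CT; split; first exact: lt_le_trans ltr01 L1.
move=> f sf s2 uf tf.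
have f0 : f != 0 by rewrite -size_poly_gt0 (ltn_trans _ s2).
have t1 : 1 <= tau f := le_trans L1 (ltW tf).
have Hv : forall w, w \in Z f -> forall v, v \in Z f^`() -> tau f <= `|w - v|.
  move=> w wZ v vZ; case: (eqVneq v w) => [evw|ne]; last exact: tau_le.
  by move: (Z_simple f w f0 uf wZ); rewrite -{1}evw (Z_root _ _ vZ) eqxx.
have g0 : Top n alpha f != 0 by rewrite -size_poly_gt0 size_Top // size_poly_gt0.
have sg : (size (Top n alpha f) <= n.+1)%N by rewrite size_Top.
apply: dF_lt => //.
- by rewrite !Z_size // size_Top.
- move=> w wZ; apply: (near_root n alpha f w (tau f) eps) => //.
  + by apply: Hv.
  + exact: le_lt_trans L3 tf.
  + have a3t : a3 < tau f := le_lt_trans L4 tf.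
    have en : eps != 0 by rewrite gt_eqF.
    rewrite -(divfK en (A * D * D + eps * (A * D))) -/a3 [eps * tau f]mulrC.
    by rewrite ltr_pM2r.
- move=> w1 w2 w1Z w2Z ne; apply: nn_le => //; apply/negP => lt.
  have xt : `|w2 - w1| <= tau f := le_trans (ltW lt) (le_trans L2 (ltW tf)).
  have ne' : w2 != w1 by rewrite eq_sym.
  have := separation n f w1 w2 (tau f) f0 sf (ltnW s2) uf w1Z (Z_root _ _ w2Z) ne' t1 (Hv w1 w1Z) xt.
  have nD : 0 < n%:R * D by rewrite mulr_gt0 ?ltr0n ?exprn_gt0 // (ltn_trans _ n2).
  have l2 : n%:R * D * `|w2 - w1| < n%:R * D * (2 * eps) by rewrite ltr_pM2l.
  move/le_lt_trans => /(_ _ l2) => h.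
  by move: (lt_le_trans h (le_trans L5 (ltW tf))); rewrite ltxx.
Qed.
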